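(* Let ${\mathbf a}_1,\dots,{\mathbf a}_m\in\mathbb{C}^n$ and let $\mathcal{A}:\mathbb{H}^{n\times n}\to\mathbb{R}^m$, $\mathcal{A}(X)=({\mathbf a}_1^*X{\mathbf a}_1,\dots,{\mathbf a}_m^*X{\mathbf a}_m)$. Let $k\ge1$ and $a>0$ be such that $ak$ is a positive integer, and suppose $\mathcal{A}$ satisfies the restricted isometry property of order $(2,2ak)$ with constants $c,C>0$ satisfying \[ c-\frac{4C}{\sqrt a}-\frac{C}{a}>0 . \] Let ${\mathbf x}_0\in\mathbb{C}^n$ be nonzero with $\|{\mathbf x}_0\|_0\le k$, let $\epsilon\ge 0$, and let ${\mathbf y}=\mathcal{A}({\mathbf x}_0{\mathbf x}_0^* )+{\mathbf w}$ with ${\mathbf w}\in\mathbb{R}^m$, $\|{\mathbf w}\|_2\le\epsilon$. Let ${\mathbf x}^\#$ be any solution of \[ \min_{{\mathbf x}\in\mathbb{C}^n}\|{\mathbf x}\|_1\quad\text{s.t.}\quad \|\mathcal{A}({\mathbf x}{\mathbf x}^* )-{\mathbf y}\|_2\le\epsilon . \] Then, with \[ C_1=\frac{\frac1a+\frac{4}{\sqrt a}+1}{c-\frac{4C}{\sqrt a}-\frac{C}{a}}, \] we have \[ \|{\mathbf x}^\#({\mathbf x}^\#)^*-{\mathbf x}_0{\mathbf x}_0^*\|_F\le C_1\frac{2\epsilon}{\sqrt m}, \] and \[ \min_{\gamma\in\mathbb{C},|\gamma|=1}\|\gamma{\mathbf x}^\#-{\mathbf x}_0\|_2\le\min\Big\{\frac{2\sqrt2\,C_1\,\epsilon}{\sqrt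 m\,\|{\mathbf x}_0\|_2},\; 2\sqrt{2\sqrt2\,C_1}\,\sqrt{\epsilon}\,(n/m)^{1/4}\Big\}. \]
   Context: $\mathbb{H}^{n\times n}$ denotes the set of $n\times n$ complex Hermitian matrices. $\|{\mathbf x}\|_0$ is the number of nonzero entries of ${\mathbf x}$. $\|X\|_{0,2}$ denotes the number of nonzero rows of $X$. $\|X\|_F$ is the Frobenius norm. A linear map $\mathcal{A}:\mathbb{H}^{n\times n}\to\mathbb{R}^m$ satisfies the restricted isometry property of order $(r,k)$ with constants $0<c\le C$ if $c\|X\|_F\le \frac1m\|\mathcal{A}(X)\|_1\le C\|X\|_F$ for all $X\in\mathbb{H}^{n\times n}$ with $\operatorname{rank}(X)\le r$ and $\|X\|_{0,2}\le k$. *)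

(* Defs.v *)
(* complex numbers as an arbitrary numClosedFieldType C
   (e.g. algC); real quantities are elements of C with Num.real. *)
From HB Require Import structures.
From mathcomp Require Import all_boot all_order all_algebra.
Set Implicit Arguments. Unset Strict Implicit. Unset Printing Implicit Defensive.
Import Order.TTheory GRing.Theory Num.Theory.
Local Open Scope ring_scope.

Section Defs.
Variable C : numClosedFieldType.

Definition adjmx (p q : nat) (X : 'M[C]_(p, q)) : 'M[C]_(q, p) :=
  map_mx Num.conj X^T.

Definition hermitian (n : nat) (X : 'M[C]_n) : Prop := adjmx X = X.

Definition l0norm (n : nat) (x : 'cV[C]_n) : nat := #|[set i | x i 0 != 0]|.

Definition nzrows (n : nat) (X : 'M[C]_n) : nat := #|[set i | row i X != 0]|.

Definition l1norm (n : nat) (x : 'cV[C]_n) : C := \sum_i `|x i 0|.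
Definition l2norm (n : nat) (x : 'cV[C]_n) : C := sqrtC (\sum_i `|x i 0| ^+ 2).
Definition frob (n : nat) (X : 'M[C]_n) : C :=
  sqrtC (\sum_i \sum_j `|X i j| ^+ 2).

Definition measure (n m : nat) (av : 'I_m -> 'cV[C]_n) (X : 'M[C]_n) : 'cV[C]_m :=
  \col_j (adjmx (av j) *m X *m av j) 0 0.

Definition outer (n : nat) (x : 'cV[C]_n) : 'M[C]_n := x *m adjmx x.

Definition RIP (n m : nat) (av : 'I_m -> 'cV[C]_n) (r k : nat) (c Cc : C) : Prop :=
  forall X : 'M[C]_n, hermitian X -> (\rank X <= r)%N -> (nzrows X <= k)%N ->
    c * frob X <= (m%:R)^-1 * l1norm (measure av X) /\
    (m%:R)^-1 * l1norm (measure av X) <= Cc * frob X.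

Definition feasible (n m : nat) (av : 'I_m -> 'cV[C]_n) (y : 'cV[C]_m) (eps : C)
  (x : 'cV[C]_n) : Prop := l2norm (measure av (outer x) - y) <= eps.

End Defs.

(* Main.v *)
Require Import Defs.
From HB Require Import structures.
From mathcomp Require Import all_boot all_order all_algebra.
From mathcomp Require Import ring.
Import Order.TTheory GRing.Theory Num.Theory.
Set Implicit Arguments. Unset Strict Implicit. Unset Printing Implicit Defensive.
Local Open Scope ring_scope.

Section Gen.
Variable C : numClosedFieldType.
Implicit Types x y z : C.

Lemma sqr_real_ge0 x : x \is Num.real -> 0 <= x ^+ 2.
Proof. by move=> xr; rewrite -real_normK // exprn_ge0. Qed.

Lemma two_mul_le x y : x \is Num.real -> y \is Num.real ->
  2 * (x * y) <= x ^+ 2 + y ^+ 2.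
Proof.
move=> xr yr; rewrite -subr_ge0.
have -> : x ^+ 2 + y ^+ 2 - 2 * (x * y) = (x - y) ^+ 2 by rewrite sqrrB; ring.
by apply: sqr_real_ge0; rewrite rpredB.
Qed.

Lemma sum_ge0_gen (I : finType) (P : pred I) (f : I -> C) :
  (forall i, 0 <= f i) -> 0 <= \sum_(i | P i) f i.
Proof. by move=> h; apply: sumr_ge0 => i _. Qed.

Lemma sum_subset_le (I : finType) (A B : {pred I}) (f : I -> C) :
  (forall i, 0 <= f i) -> {subset A <= B} ->
  \sum_(i in A) f i <= \sum_(i in B) f i.
Proof.
move=> h sAB; rewrite [X in X <= _]big_mkcond [X in _ <= X]big_mkcond /=.
apply: ler_sum => i _; case: ifP => iA; first by rewrite (sAB i iA).
by case: ifP.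
Qed.

Lemma CS2 (I : finType) (P : pred I) (a b : I -> C) :
  (forall i, a i \is Num.real) -> (forall i, b i \is Num.real) ->
  (\sum_(i | P i) a i * b i) ^+ 2 <=
  (\sum_(i | P i) a i ^+ 2) * (\sum_(i | P i) b i ^+ 2).
Proof.
move=> ar br.
have E : (\sum_(i | P i) a i * b i) ^+ 2 =
         \sum_(i | P i) \sum_(j | P j) (a i * b j) * (a j * b i).
  rewrite expr2 mulr_suml; apply: eq_bigr => i _; rewrite mulr_sumr.
  by apply: eq_bigr => j _; ring.
rewrite E.
have E2 : (\sum_(i | P i) a i ^+ 2) * (\sum_(j | P j) b j ^+ 2) =
  \sum_(i | P i) \sum_(j | P j) (a i * b j) ^+ 2.
  by rewrite mulr_suml; apply: eq_bigr => i _; rewrite mulr_sumr; apply: eq_bigr => j _; rewrite exprMn.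
have E3 : (\sum_(i | P i) a i ^+ 2) * (\sum_(j | P j) b j ^+ 2) =
  \sum_(i | P i) \sum_(j | P j) (a j * b i) ^+ 2.
  rewrite E2 exchange_big /=; apply: eq_bigr => i _; apply: eq_bigr => j _ //.
rewrite -[X in _ <= X]mulr1 -[1 : C](@divff _ 2) ?pnatr_eq0 //.
rewrite mulrA mulr_natr mulr2n.
rewrite {1}E2 E3 -big_split /= mulr_suml.
apply: ler_sum => i _; rewrite -big_split /= mulr_suml; apply: ler_sum => j _.
rewrite ler_pdivlMr ?ltr0n // mulrC; apply: two_mul_le; apply: rpredM => //.
Qed.

End Gen.
Section Gen2.
Variable C : numClosedFieldType.
Implicit Types x y z : C.

Lemma nneg_real x : 0 <= x -> x \is Num.real.
Proof. exact: ger0_real. Qed.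

Lemma sqrtC_le x y : 0 <= x -> x <= y -> sqrtC x <= sqrtC y.
Proof.
move=> x0 xy; rewrite ler_sqrtC // ?nnegrE //; exact: le_trans xy.
Qed.

Lemma sqrtC_le_l x y : 0 <= x -> 0 <= y -> x <= y ^+ 2 -> sqrtC x <= y.
Proof. by move=> x0 y0 h; rewrite -(sqrCK y0); apply: sqrtC_le. Qed.

Lemma sqrtC_le_r x y : 0 <= x -> x ^+ 2 <= y -> x <= sqrtC y.
Proof. by move=> x0 h; rewrite -(sqrCK x0); apply: sqrtC_le => //; apply: exprn_ge0. Qed.

Lemma le_of_sqr x y : 0 <= x -> 0 <= y -> x ^+ 2 <= y ^+ 2 -> x <= y.
Proof. by move=> x0 y0; rewrite ler_pXn2r // nnegrE. Qed.

Lemma sqr_le x y : 0 <= x -> x <= y -> x ^+ 2 <= y ^+ 2.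
Proof. move=> x0 xy; rewrite ler_pXn2r // nnegrE //; exact: le_trans xy. Qed.

Lemma sqrtCMn x y : 0 <= x -> 0 <= y -> sqrtC (x * y) = sqrtC x * sqrtC y.
Proof. by move=> x0 y0; rewrite sqrtCM // nnegrE. Qed.

Lemma CSsqrt (I : finType) (P : pred I) (a b : I -> C) :
  \sum_(i | P i) `|a i| * `|b i| <=
  sqrtC (\sum_(i | P i) `|a i| ^+ 2) * sqrtC (\sum_(i | P i) `|b i| ^+ 2).
Proof.
rewrite -sqrtCMn; try by apply: sumr_ge0 => i _; apply: exprn_ge0.
apply: sqrtC_le_r; first by apply: sumr_ge0 => i _; rewrite mulr_ge0.
by apply: CS2 => i; apply: nneg_real.
Qed.

Lemma CScard (I : finType) (P : pred I) (f : I -> C) :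
  \sum_(i | P i) `|f i| <= sqrtC (#|P|%:R) * sqrtC (\sum_(i | P i) `|f i| ^+ 2).
Proof.
have := CSsqrt P (fun _ => 1) f.
have -> : \sum_(i | P i) `|(fun=> 1 : C) i| ^+ 2 = #|P|%:R.
  by rewrite (eq_bigr (fun _ => 1)) ?sumr_const // => i _; rewrite normr1 expr1n.
by under eq_bigl do rewrite /=; under eq_bigr do rewrite normr1 mul1r.
Qed.

Lemma nrm_tri (I : finType) (P : pred I) (f g : I -> C) :
  sqrtC (\sum_(i | P i) `|f i + g i| ^+ 2) <=
  sqrtC (\sum_(i | P i) `|f i| ^+ 2) + sqrtC (\sum_(i | P i) `|g i| ^+ 2).
Proof.
set A := \sum_(i | P i) `|f i| ^+ 2; set B := \sum_(i | P i) `|g i| ^+ 2.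
have A0 : 0 <= A by apply: sumr_ge0 => i _; apply: exprn_ge0.
have B0 : 0 <= B by apply: sumr_ge0 => i _; apply: exprn_ge0.
apply: sqrtC_le_l; first by apply: sumr_ge0 => i _; apply: exprn_ge0.
  by rewrite addr_ge0 // sqrtC_ge0.
rewrite sqrrD !sqrtCK.
apply: (@le_trans _ _ (\sum_(i | P i) (`|f i| + `|g i|) ^+ 2)).
  apply: ler_sum => i _; apply: sqr_le => //; exact: ler_normD.
have -> : \sum_(i | P i) (`|f i| + `|g i|) ^+ 2 =
   A + B + 2 * \sum_(i | P i) `|f i| * `|g i|.
  rewrite /A /B -big_split /= mulr_sumr -big_split /=; apply: eq_bigr => i _.
  by rewrite sqrrD; ring.
rewrite [X in _ <= X]addrAC.
apply: lerD => //; have h := ler_wpM2l (ler0n C 2) (CSsqrt P f g).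
by rewrite -[X in _ <= X]mulr_natl.
Qed.

End Gen2.
Section Mat.
Variable C : numClosedFieldType.

Definition sym (n : nat) (x y : 'cV[C]_n) : 'M[C]_n := x *m adjmx y + y *m adjmx x.

Lemma adjmxE p q (X : 'M[C]_(p, q)) i j : adjmx X i j = (X j i)^*.
Proof. by rewrite /adjmx !mxE. Qed.

Lemma adjmxD p q (X Y : 'M[C]_(p, q)) : adjmx (X + Y) = adjmx X + adjmx Y.
Proof. by apply/matrixP => i j; rewrite !(mxE, adjmxE) rmorphD. Qed.

Lemma adjmxN p q (X : 'M[C]_(p, q)) : adjmx (- X) = - adjmx X.
Proof. by apply/matrixP => i j; rewrite !(mxE, adjmxE) rmorphN. Qed.

Lemma adjmx0 p q : adjmx (0 : 'M[C]_(p, q)) = 0.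
Proof. by apply/matrixP => i j; rewrite !(mxE, adjmxE) rmorph0. Qed.

Lemma adjmxZ p q (t : C) (X : 'M[C]_(p, q)) : adjmx (t *: X) = t^* *: adjmx X.
Proof. by apply/matrixP => i j; rewrite !(mxE, adjmxE) rmorphM. Qed.

Lemma adjmxK p q (X : 'M[C]_(p, q)) : adjmx (adjmx X) = X.
Proof. by apply/matrixP => i j; rewrite !adjmxE conjCK. Qed.

Lemma adjmxM p q r (X : 'M[C]_(p, q)) (Y : 'M[C]_(q, r)) :
  adjmx (X *m Y) = adjmx Y *m adjmx X.
Proof.
apply/matrixP => i j; rewrite !(mxE, adjmxE) rmorph_sum; apply: eq_bigr => l _.
by rewrite !adjmxE rmorphM mulrC.
Qed.

Lemma adjmx_sum p q (I : Type) (r : seq I) (P : pred I) (F : I -> 'M[C]_(p, q)) :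
  adjmx (\sum_(i <- r | P i) F i) = \sum_(i <- r | P i) adjmx (F i).
Proof. exact: (big_morph _ (@adjmxD p q) (@adjmx0 p q)). Qed.

Lemma mulE n (x y : 'cV[C]_n) i j : (x *m adjmx y) i j = x i 0 * (y j 0)^*.
Proof. by rewrite !mxE big_ord1 adjmxE. Qed.

Lemma frob_ge0 n (X : 'M[C]_n) : 0 <= frob X.
Proof. by rewrite /frob sqrtC_ge0; do 2!(apply: sumr_ge0 => ? _); apply: exprn_ge0. Qed.

Lemma l2_ge0 n (x : 'cV[C]_n) : 0 <= l2norm x.
Proof. by rewrite /l2norm sqrtC_ge0; apply: sumr_ge0 => ? _; apply: exprn_ge0. Qed.

Lemma l1_ge0 n (x : 'cV[C]_n) : 0 <= l1norm x.
Proof. by apply: sumr_ge0 => ? _. Qed.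

Lemma frob_pair n (X : 'M[C]_n) :
  frob X = sqrtC (\sum_(p : 'I_n * 'I_n) `|X p.1 p.2| ^+ 2).
Proof. by rewrite /frob pair_bigA. Qed.

Lemma frobD n (X Y : 'M[C]_n) : frob (X + Y) <= frob X + frob Y.
Proof.
rewrite !frob_pair.
under eq_bigr do rewrite mxE.
exact: (nrm_tri predT (fun p : 'I_n * 'I_n => X p.1 p.2) (fun p => Y p.1 p.2)).
Qed.

Lemma frobN n (X : 'M[C]_n) : frob (- X) = frob X.
Proof. by rewrite /frob; under eq_bigr do under eq_bigr do rewrite mxE normrN. Qed.

Lemma frob0 n : frob (0 : 'M[C]_n) = 0.
Proof.
rewrite /frob big1 ?sqrtC0 // => i _; rewrite big1 // => j _.
by rewrite mxE normr0 expr0n.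
Qed.

Lemma frob_sum n (I : Type) (r : seq I) (P : pred I) (F : I -> 'M[C]_n) :
  frob (\sum_(i <- r | P i) F i) <= \sum_(i <- r | P i) frob (F i).
Proof.
elim/big_rec2: _ => [|i y1 y2 _ h]; first by rewrite frob0.
by apply: le_trans (frobD _ _) _; apply: lerD.
Qed.

Lemma frob_mul n (x y : 'cV[C]_n) : frob (x *m adjmx y) = l2norm x * l2norm y.
Proof.
rewrite /frob /l2norm -sqrtCMn; try by apply: sumr_ge0 => ? _; apply: exprn_ge0.
congr sqrtC; rewrite mulr_suml; apply: eq_bigr => i _; rewrite mulr_sumr.
by apply: eq_bigr => j _; rewrite mulE normrM norm_conjC exprMn.
Qed.

Lemma frob_sym n (x y : 'cV[C]_n) : frob (sym x y) <= 2 * (l2norm x * l2norm y).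
Proof.
apply: le_trans (frobD _ _) _; rewrite !frob_mul mulrC [l2norm y * _]mulrC.
by rewrite mulr2n mulrDl mul1r.
Qed.

Lemma l2D n (x y : 'cV[C]_n) : l2norm (x + y) <= l2norm x + l2norm y.
Proof.
rewrite /l2norm; under eq_bigr do rewrite mxE.
exact: (nrm_tri predT (fun i : 'I_n => x i 0) (fun i => y i 0)).
Qed.

Lemma l2N n (x : 'cV[C]_n) : l2norm (- x) = l2norm x.
Proof. by rewrite /l2norm; under eq_bigr do rewrite mxE normrN. Qed.

Lemma l2Z n (t : C) (x : 'cV[C]_n) : l2norm (t *: x) = `|t| * l2norm x.
Proof.
rewrite /l2norm; under eq_bigr do rewrite mxE normrM exprMn.
by rewrite -mulr_sumr sqrtCMn ?exprn_ge0 ?sqrCK //; apply: sumr_ge0 => ? _; apply: exprn_ge0.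
Qed.

Lemma l1D n (x y : 'cV[C]_n) : l1norm (x + y) <= l1norm x + l1norm y.
Proof.
rewrite /l1norm -big_split /=; apply: ler_sum => i _; rewrite mxE; exact: ler_normD.
Qed.

Lemma l1N n (x : 'cV[C]_n) : l1norm (- x) = l1norm x.
Proof. by rewrite /l1norm; under eq_bigr do rewrite mxE normrN. Qed.

Lemma l10 n : l1norm (0 : 'cV[C]_n) = 0.
Proof. by rewrite /l1norm big1 // => i _; rewrite mxE normr0. Qed.

Lemma l1_sum n (I : Type) (r : seq I) (P : pred I) (F : I -> 'cV[C]_n) :
  l1norm (\sum_(i <- r | P i) F i) <= \sum_(i <- r | P i) l1norm (F i).
Proof.
elim/big_rec2: _ => [|i y1 y2 _ h]; first by rewrite l10.
by apply: le_trans (l1D _ _) _; apply: lerD.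
Qed.

Lemma measE n m (av : 'I_m -> 'cV[C]_n) X j k :
  measure av X j k = (adjmx (av j) *m X *m av j) 0 0.
Proof. by rewrite /measure mxE. Qed.

Lemma measureD n m (av : 'I_m -> 'cV[C]_n) X Y :
  measure av (X + Y) = measure av X + measure av Y.
Proof. by apply/matrixP => i j; rewrite [in RHS]mxE !measE mulmxDr mulmxDl mxE. Qed.

Lemma measure0 n m (av : 'I_m -> 'cV[C]_n) : measure av 0 = 0.
Proof. by apply/matrixP => i j; rewrite measE mulmx0 mul0mx !mxE. Qed.

Lemma measureN n m (av : 'I_m -> 'cV[C]_n) X : measure av (- X) = - measure av X.
Proof.
by apply/matrixP => i j; rewrite [in RHS]mxE !measE -scaleN1r -scalemxAr -scalemxAl mxE mulN1r.
Qed.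

Lemma measureB n m (av : 'I_m -> 'cV[C]_n) X Y :
  measure av (X - Y) = measure av X - measure av Y.
Proof. by rewrite measureD measureN. Qed.

Lemma measure_sum n m (av : 'I_m -> 'cV[C]_n) (I : Type) (r : seq I) (P : pred I) F :
  measure av (\sum_(i <- r | P i) F i) = \sum_(i <- r | P i) measure av (F i).
Proof. exact: (big_morph _ (measureD av) (measure0 av)). Qed.

End Mat.
Section Pieces.
Variable C : numClosedFieldType.

Lemma herm_sym n (x y : 'cV[C]_n) : Defs.hermitian (sym x y).
Proof. by rewrite /Defs.hermitian /sym adjmxD !adjmxM !adjmxK addrC. Qed.

Lemma herm_outerB n (x y : 'cV[C]_n) : Defs.hermitian (outer x - outer y).
Proof. by rewrite /Defs.hermitian /outer adjmxD adjmxN !adjmxM !adjmxK. Qed.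

Lemma rank_two n (x y x' y' : 'cV[C]_n) :
  (\rank (x *m adjmx y + x' *m adjmx y')%R <= 2)%N.
Proof.
apply: leq_trans (mxrank_add _ _) _.
have h1 : forall (a b : 'cV[C]_n), (\rank (a *m adjmx b) <= 1)%N.
  by move=> a b; apply: leq_trans (mxrankM_maxl _ _) (rank_leq_col _).
by rewrite -[2%N]/(1 + 1)%N; apply: leq_add.
Qed.

Lemma nzrows_le n (X : 'M[C]_n) (S : {set 'I_n}) :
  (forall i, i \notin S -> row i X = 0) -> (nzrows X <= #|S|)%N.
Proof.
move=> h; apply: subset_leq_card; apply/subsetP => i; rewrite inE.
by apply: contraR => iS; rewrite h.
Qed.

Lemma row_two n (x y x' y' : 'cV[C]_n) i :
  x i 0 = 0 -> x' i 0 = 0 -> row i (x *m adjmx y + x' *m adjmx y') = 0.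
Proof.
by move=> h h'; apply/rowP => j; rewrite mxE [X in X = _]mxE !mulE h h' !mul0r addr0 mxE.
Qed.

Lemma RIP_upper_sym n m (av : 'I_m -> 'cV[C]_n) K c Cc (S : {set 'I_n}) (x y : 'cV[C]_n) :
  RIP av 2 K c Cc -> (#|S| <= K)%N ->
  (forall i, i \notin S -> x i 0 = 0) -> (forall i, i \notin S -> y i 0 = 0) ->
  0 <= Cc ->
  m%:R^-1 * l1norm (measure av (sym x y)) <= Cc * (2 * (l2norm x * l2norm y)).
Proof.
move=> R SK hx hy C0.
have [_ h] := R (sym x y) (herm_sym x y) (rank_two _ _ _ _)
   (leq_trans (nzrows_le (fun i iS => row_two _ _ (hx i iS) (hy i iS))) SK).
by apply: le_trans h _; apply: ler_wpM2l => //; apply: frob_sym.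
Qed.

Lemma RIP_lower_outer n m (av : 'I_m -> 'cV[C]_n) K c Cc (S : {set 'I_n}) (x y : 'cV[C]_n) :
  RIP av 2 K c Cc -> (#|S| <= K)%N ->
  (forall i, i \notin S -> x i 0 = 0) -> (forall i, i \notin S -> y i 0 = 0) ->
  c * frob (outer x - outer y) <= m%:R^-1 * l1norm (measure av (outer x - outer y)).
Proof.
move=> R SK hx hy.
have E : outer x - outer y = x *m adjmx x + (- y) *m adjmx y by rewrite /outer mulNmx.
have hy' : forall i, i \notin S -> (- y) i 0 = 0 by move=> i iS; rewrite mxE hy ?oppr0.
have r2 : (\rank (outer x - outer y)%R <= 2)%N by rewrite E rank_two.
have nz : (nzrows (outer x - outer y) <= K)%N.
  by rewrite E; apply: (leq_trans (nzrows_le (fun i iS => row_two _ _ (hx i iS) (hy' i iS))) SK).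
have [h _] := R (outer x - outer y) (herm_outerB x y) r2 nz.
exact: h.
Qed.

End Pieces.
Section Phase.
Variable C : numClosedFieldType.

Lemma sum_prod (I : finType) (a b : I -> C) :
  \sum_i \sum_j a i * b j = (\sum_i a i) * (\sum_j b j).
Proof. by rewrite mulr_suml; apply: eq_bigr => i _; rewrite mulr_sumr. Qed.

Lemma sum4 (I : finType) (a1 b1 a2 b2 a3 b3 a4 b4 : I -> C) :
  \sum_i \sum_j (a1 i * b1 j - a2 i * b2 j - a3 i * b3 j + a4 i * b4 j) =
  (\sum_i a1 i) * (\sum_j b1 j) - (\sum_i a2 i) * (\sum_j b2 j)
  - (\sum_i a3 i) * (\sum_j b3 j) + (\sum_i a4 i) * (\sum_j b4 j).
Proof.
rewrite -!sum_prod -!sumrB -big_split /=; apply: eq_bigr => i _.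
by rewrite -!sumrB -big_split.
Qed.

Lemma phase n (x y : 'cV[C]_n) : exists g : C, `|g| = 1 /\
  (\sum_i `|g * x i 0 - y i 0| ^+ 2) *
     (\sum_i `|x i 0| ^+ 2 + \sum_i `|y i 0| ^+ 2) <=
  2 * (\sum_i \sum_j `|(outer x - outer y) i j| ^+ 2) /\
  \sum_i \sum_j `|(outer x - outer y) i j| ^+ 2 <=
  (\sum_i `|x i 0| ^+ 2 + \sum_i `|y i 0| ^+ 2) ^+ 2.
Proof.
set z := \sum_i (x i 0)^* * y i 0.
set p := \sum_i `|x i 0| ^+ 2; set q := \sum_i `|y i 0| ^+ 2.
have p0 : 0 <= p by apply: sumr_ge0 => ? _; apply: exprn_ge0.
have q0 : 0 <= q by apply: sumr_ge0 => ? _; apply: exprn_ge0.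
have zc : \sum_i x i 0 * (y i 0)^* = z^*.
  by rewrite rmorph_sum; apply: eq_bigr => i _; rewrite rmorphM /= conjCK mulrC.
have pE : \sum_i x i 0 * (x i 0)^* = p by apply: eq_bigr => i _; rewrite normCK.
have pE' : \sum_i (x i 0)^* * x i 0 = p by apply: eq_bigr => i _; rewrite normCKC.
have qE : \sum_i y i 0 * (y i 0)^* = q by apply: eq_bigr => i _; rewrite normCK.
have qE' : \sum_i (y i 0)^* * y i 0 = q by apply: eq_bigr => i _; rewrite normCKC.
have zE : \sum_i y i 0 * (x i 0)^* = z by apply: eq_bigr => i _; rewrite mulrC.
have zE' : \sum_i (y i 0)^* * x i 0 = z^*.
  by rewrite -zc; apply: eq_bigr => i _; rewrite mulrC.
pose g : C := if z == 0 then 1 else z / `|z|.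
have [g1 gz gz'] : [/\ `|g| = 1, g * z^* = `|z| & g^* * z = `|z|].
  rewrite /g; case: eqP => [->|/eqP z0]; first by rewrite normr1 conjC0 conjC1 !mulr0 normr0.
  have nz : `|z| != 0 by rewrite normr_eq0.
  split; first by rewrite normrM normfV normr_id divff.
    by rewrite mulrAC -normCK expr2 mulrK // unitfE.
  rewrite rmorphM fmorphV /= conj_normC mulrAC -normCKC expr2 mulrK //.
  by rewrite unitfE.
set r := `|z|.
have r0 : 0 <= r by apply: normr_ge0.
have F2E : \sum_i \sum_j `|(outer x - outer y) i j| ^+ 2 = p ^+ 2 + q ^+ 2 - 2 * r ^+ 2.
  have Ex : forall i j, `|(outer x - outer y) i j| ^+ 2 =
    (x i 0 * (x i 0)^*) * ((x j 0)^* * x j 0) - (x i 0 * (y i 0)^*) * ((x j 0)^* * y j 0)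
    - (y i 0 * (x i 0)^*) * ((y j 0)^* * x j 0) + (y i 0 * (y i 0)^*) * ((y j 0)^* * y j 0).
    move=> i j.
    have e : (outer x - outer y) i j = x i 0 * (x j 0)^* - y i 0 * (y j 0)^*.
      by rewrite mxE [X in _ + X]mxE /outer !mulE.
    rewrite normCK e rmorphB !rmorphM /= !conjCK.
    ring.
  under eq_bigr do under eq_bigr do rewrite Ex.
  rewrite sum4 pE pE' qE qE' zc zE zE' -/z /r normCK.
  ring.
have D2E : \sum_i `|g * x i 0 - y i 0| ^+ 2 = p + q - 2 * r.
  have Ex : forall i, `|g * x i 0 - y i 0| ^+ 2 =
    (g * g^*) * (x i 0 * (x i 0)^*) - g * (x i 0 * (y i 0)^*)
     - g^* * ((x i 0)^* * y i 0) + y i 0 * (y i 0)^*.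
    by move=> i; rewrite normCK rmorphB rmorphM; ring.
  under eq_bigr do rewrite Ex.
  rewrite big_split /= !sumrB -!mulr_sumr pE qE zc -/z -normCK g1 expr1n mul1r.
  rewrite gz gz' /r; ring.
exists g; split => //.
rewrite F2E D2E; split.
  rewrite -subr_ge0.
  have -> : 2 * (p ^+ 2 + q ^+ 2 - 2 * r ^+ 2) - (p + q - 2 * r) * (p + q) =
     (p - q) ^+ 2 + 2 * r * (p + q - 2 * r) by ring.
  apply: addr_ge0; first by apply: sqr_real_ge0; apply: rpredB; apply: nneg_real.
  apply: mulr_ge0; first by apply: mulr_ge0.
  by rewrite -D2E; apply: sumr_ge0 => ? _; rewrite exprn_ge0.
rewrite -subr_ge0.
have -> : (p + q) ^+ 2 - (p ^+ 2 + q ^+ 2 - 2 * r ^+ 2) = 2 * (p * q) + 2 * r ^+ 2 by ring.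
by apply: addr_ge0; apply: mulr_ge0 => //; [apply: mulr_ge0 | apply: exprn_ge0].
Qed.

End Phase.
Section Blocks.
Variable C : numClosedFieldType.

Lemma blocks n (s : nat) (f : 'I_n -> C) (T0 : {set 'I_n}) :
  (0 < s)%N -> (forall i, 0 <= f i) ->
  exists blk : 'I_n -> nat,
  (forall i, i \notin T0 -> (blk i < n)%N) /\
  (forall j, (#|[set i | (i \notin T0) && (blk i == j)]| <= s)%N) /\
  (forall j i, i \notin T0 -> blk i = j.+1 ->
      s%:R * f i <= \sum_(l in [set l | (l \notin T0) && (blk l == j)]) f l).
Proof.
move=> s0 f0.
pose leT := fun a b : 'I_n => f b <= f a.
have tot : total leT.
  by move=> a b; rewrite /leT orbC; apply: real_leVge; apply: nneg_real.
have tr : transitive leT by move=> b a c h1 h2; rewrite /leT; apply: le_trans h2 h1.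
have rfl : reflexive leT by move=> a; rewrite /leT.
pose L := sort leT (enum (~: T0)).
have uL : uniq L by rewrite sort_uniq enum_uniq.
have memL : forall i, (i \in L) = (i \notin T0).
  by move=> i; rewrite mem_sort mem_enum inE.
have sL : sorted leT L by apply: sort_sorted.
have szL : (size L <= n)%N.
  by rewrite size_sort -cardE; apply: leq_trans (max_card _) _; rewrite card_ord.
exists (fun i => (index i L %/ s)%N); split; last split.
- move=> i iT; apply: leq_ltn_trans (leq_div _ _) _.
  by apply: leq_trans szL; rewrite index_mem memL.
- move=> j; case: (set_0Vmem [set i | (i \notin T0) && (index i L %/ s == j)%N]) => [->|[x0 _]].
    by rewrite cards0.
  pose g := fun p : 'I_s => nth x0 L (j * s + p).
  apply: (@leq_trans #|[set g p | p in 'I_s]|); last by rewrite (leq_trans (leq_imset_card _ _)) // card_ord.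
  apply: subset_leq_card; apply/subsetP => l; rewrite inE => /andP [lT /eqP lj].
  have lL : l \in L by rewrite memL.
  apply/imsetP; exists (Ordinal (ltn_pmod (index l L) s0)) => //.
  by rewrite /g /= -lj -divn_eq nth_index.
- move=> j i iT bi.
  have iL : i \in L by rewrite memL.
  set q := index i L.
  have qL : (q < size L)%N by rewrite index_mem.
  have jq : (j.+1 * s <= q)%N by rewrite -bi leq_trunc_div.
  pose g := fun p : 'I_s => nth i L (j * s + p).
  have gpos : forall p : 'I_s, (j * s + p < j.+1 * s)%N.
    by move=> p; rewrite mulSn addnC ltn_add2r.
  have gL : forall p : 'I_s, (j * s + p < size L)%N.
    by move=> p; apply: leq_trans (gpos p) _; apply: leq_trans jq (ltnW qL).
  have ginj : {in [set: 'I_s] &, injective g}.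
    move=> p p' _ _ /eqP; rewrite /g nth_uniq ?gL // eqn_add2l => /eqP h.
    exact: val_inj.
  have -> : s%:R * f i = \sum_(p in [set: 'I_s]) f i.
    by rewrite sumr_const cardsT card_ord mulr_natl.
  apply: (@le_trans _ _ (\sum_(p in [set: 'I_s]) f (g p))).
    apply: ler_sum => p _.
    have h := sorted_leq_nth tr rfl i sL.
    rewrite -{1}(nth_index i iL); apply: (h (j * s + p) q).
    + by rewrite inE gL.
    + by rewrite inE.
    by apply: ltnW; apply: leq_trans (gpos p) jq.
  rewrite -big_imset //.
  apply: sum_subset_le => // l /imsetP [p _ ->].
  rewrite inE -memL mem_nth ?gL //= index_uniq ?gL //.
  by rewrite divnMDl // divn_small // addn0.
Qed.

End Blocks.
Section Ident.
Variable C : numClosedFieldType.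

Lemma outer_add n (a b : 'cV[C]_n) : outer (a + b) = outer a + sym a b + outer b.
Proof.
rewrite /outer /sym adjmxD mulmxDl !mulmxDr.
by rewrite !addrA.
Qed.

Lemma sym_addl n (a b y : 'cV[C]_n) : sym (a + b) y = sym a y + sym b y.
Proof.
rewrite /sym adjmxD mulmxDl mulmxDr.
by rewrite !addrA; congr (_ + _); rewrite addrAC.
Qed.

Lemma sym_sumr n (x : 'cV[C]_n) (I : Type) (r : seq I) (P : pred I) (F : I -> 'cV[C]_n) :
  sym x (\sum_(i <- r | P i) F i) = \sum_(i <- r | P i) sym x (F i).
Proof.
rewrite /sym adjmx_sum mulmx_sumr mulmx_suml -big_split /=.
by apply: eq_bigr.
Qed.

Lemma conj_half : (2^-1 : C)^* = 2^-1.
Proof. by rewrite fmorphV /= conjC_nat. Qed.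

Lemma outer_sum n N (F : 'I_N -> 'cV[C]_n) :
  outer (\sum_(j < N) F j) = \sum_(i < N) \sum_(j < N) sym (2^-1 *: F i) (F j).
Proof.
have E : outer (\sum_(j < N) F j) = \sum_(i < N) \sum_(j < N) F i *m adjmx (F j).
  rewrite /outer adjmx_sum mulmx_suml; apply: eq_bigr => i _.
  by rewrite mulmx_sumr.
rewrite E /sym.
under [RHS]eq_bigr do under eq_bigr do rewrite adjmxZ conj_half -scalemxAl -scalemxAr.
under [RHS]eq_bigr do under eq_bigr do rewrite -scalerDr.
under [RHS]eq_bigr do rewrite -scaler_sumr big_split /=.
rewrite -scaler_sumr big_split /= -E.
rewrite [X in _ = _ *: (_ + X)]exchange_big /= -E.
by rewrite -mulr2n -scaler_nat scalerA mulVf ?pnatr_eq0 // scale1r.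
Qed.

Definition restrict n (S : {set 'I_n}) (x : 'cV[C]_n) : 'cV[C]_n :=
  \col_i (if i \in S then x i 0 else 0).

Lemma restrictE n S (x : 'cV[C]_n) i : restrict S x i 0 = if i \in S then x i 0 else 0.
Proof. by rewrite mxE. Qed.

Lemma l2_restrict n S (x : 'cV[C]_n) :
  l2norm (restrict S x) = sqrtC (\sum_(i in S) `|x i 0| ^+ 2).
Proof.
rewrite /l2norm [in RHS]big_mkcond /=; congr sqrtC; apply: eq_bigr => i _.
by rewrite restrictE; case: ifP => //; rewrite normr0 expr0n.
Qed.

End Ident.
Section Core.
Variable C : numClosedFieldType.

Definition MM n m (av : 'I_m -> 'cV[C]_n) (X : 'M[C]_n) : C :=
  m%:R^-1 * l1norm (measure av X).

Lemma MM_ge0 n m (av : 'I_m -> 'cV[C]_n) X : 0 <= MM av X.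
Proof. by rewrite /MM mulr_ge0 ?invr_ge0 ?ler0n ?l1_ge0. Qed.

Lemma MMD n m (av : 'I_m -> 'cV[C]_n) X Y : MM av (X + Y) <= MM av X + MM av Y.
Proof.
rewrite /MM -mulrDr ler_wpM2l ?invr_ge0 ?ler0n // measureD; exact: l1D.
Qed.

Lemma MMN n m (av : 'I_m -> 'cV[C]_n) X : MM av (- X) = MM av X.
Proof. by rewrite /MM measureN l1N. Qed.

Lemma MM_sum n m (av : 'I_m -> 'cV[C]_n) (I : Type) (r : seq I) (P : pred I) F :
  MM av (\sum_(i <- r | P i) F i) <= \sum_(i <- r | P i) MM av (F i).
Proof.
rewrite /MM -mulr_sumr ler_wpM2l ?invr_ge0 ?ler0n // measure_sum; exact: l1_sum.
Qed.

Lemma cardsU_le (T : finType) (A B : {set T}) : (#|A :|: B| <= #|A| + #|B|)%N.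
Proof. by rewrite cardsU leq_subr. Qed.

Lemma RIP_both_outer n m (av : 'I_m -> 'cV[C]_n) K c Cc (S : {set 'I_n}) (x y : 'cV[C]_n) :
  RIP av 2 K c Cc -> (#|S| <= K)%N ->
  (forall i, i \notin S -> x i 0 = 0) -> (forall i, i \notin S -> y i 0 = 0) ->
  c * frob (outer x - outer y) <= MM av (outer x - outer y) /\
  MM av (outer x - outer y) <= Cc * frob (outer x - outer y).
Proof.
move=> R SK hx hy.
have E : outer x - outer y = x *m adjmx x + (- y) *m adjmx y by rewrite /outer mulNmx.
have hy' : forall i, i \notin S -> (- y) i 0 = 0 by move=> i iS; rewrite mxE hy ?oppr0.
have r2 : (\rank (outer x - outer y)%R <= 2)%N by rewrite E rank_two.
have nz : (nzrows (outer x - outer y) <= K)%N.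
  by rewrite E; apply: (leq_trans (nzrows_le (fun i iS => row_two _ _ (hx i iS) (hy' i iS))) SK).
exact: R (outer x - outer y) (herm_outerB x y) r2 nz.
Qed.

End Core.
Section Core2.
Variable C : numClosedFieldType.

Lemma core n m (av : 'I_m -> 'cV[C]_n) (k s : nat) (a c Cc : C) (x0 xs : 'cV[C]_n) :
  (1 <= k)%N -> a \is Num.real -> 0 < a -> a * k%:R = s%:R ->
  c \is Num.real -> Cc \is Num.real -> 0 < c -> 0 < Cc ->
  RIP av 2 (2 * s) c Cc ->
  0 < c - 4 * Cc / sqrtC a - Cc / a ->
  x0 != 0 -> (l0norm x0 <= k)%N -> l1norm xs <= l1norm x0 ->
  frob (outer xs - outer x0) <=
    (a^-1 + 4 / sqrtC a + 1) / (c - 4 * Cc / sqrtC a - Cc / a) *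
    MM av (outer xs - outer x0).
Proof.
move=> k1 ar a0 aks cr Ccr c0 Cc0 rip den0 x0nz l0 l1le.
have s0 : (0 < s)%N by rewrite -(ltr0n C) -aks mulr_gt0 // ltr0n.
have [i0 xi0] : exists i0, x0 i0 0 != 0.
  apply/existsP; apply: contraR x0nz; rewrite negb_exists => /forallP h.
  by apply/eqP/matrixP => i j; rewrite (ord1 j) mxE; move/negPn/eqP: (h i).
have cC : c <= Cc.
  pose e : 'cV[C]_n := \col_j (j == i0)%:R.
  have he : forall i, i \notin [set i0] -> e i 0 = 0.
    by move=> i; rewrite inE mxE => /negbTE ->.
  have h0 : forall i : 'I_n, i \notin [set i0] -> (0 : 'cV[C]_n) i 0 = 0 by move=> i _; rewrite mxE.
  have cs : (#|[set i0]| <= 2 * s)%N.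
    by rewrite cards1 (leq_trans s0) // leq_pmull.
  have [h1 h2] := RIP_both_outer rip cs he h0.
  have fe : frob (outer e - outer 0) = 1.
    rewrite /outer mul0mx subr0 frob_mul /l2norm (bigD1 i0) //= big1.
      by rewrite mxE eqxx normr1 expr1n addr0 sqrtC1 mulr1.
    by move=> i /negbTE ne; rewrite mxE ne normr0 expr0n.
  rewrite fe !mulr1 in h1 h2; exact: le_trans h1 h2.
have sa0 : 0 < sqrtC a by rewrite sqrtC_gt0.
have a1 : 1 <= a.
  rewrite real_leNgt ?real1 //; apply/negP => alt1.
  have : c - 4 * Cc / sqrtC a - Cc / a <= 0.
    have h1 : Cc <= Cc / a.
      by rewrite ler_peMr ?(ltW Cc0) // invf_ge1 // ltW.
    have h2 : 0 <= 4 * Cc / sqrtC a by rewrite !mulr_ge0 ?invr_ge0 ?ltW.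
    rewrite -addrA -opprD subr_le0; apply: le_trans cC _.
    by apply: le_trans h1 _; rewrite lerDr.
  by move=> h; have := lt_le_trans den0 h; rewrite ltxx.
have ks : (k <= s)%N by rewrite -(ler_nat C) -aks ler_peMl // ler0n.
set T0 := [set i | x0 i 0 != 0].
have T0k : (#|T0| <= k)%N := l0.
have x0out : forall i, i \notin T0 -> x0 i 0 = 0.
  by move=> i; rewrite inE negbK => /eqP.
have [blk [blkn [Bcard Bmono]]] :=
  @blocks _ n s (fun i => `|xs i 0|) T0 s0 (fun i => normr_ge0 _).
set B := fun j => [set i | (i \notin T0) && (blk i == j)].
set u := restrict T0 xs.
set w := fun j => restrict (B j) xs.
set z := u + w 0%N.
set R := \sum_(j < n) w j.+1.
have wE : forall j i, w j i 0 = if (i \notin T0) && (blk i == j) then xs i 0 else 0.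
  by move=> j i; rewrite /w restrictE inE.
have uE : forall i, u i 0 = if i \in T0 then xs i 0 else 0.
  by move=> i; rewrite /u restrictE.
have xsE : xs = z + R.
  apply/matrixP => i j; rewrite (ord1 j) [RHS]mxE [z _ _]mxE summxE uE wE.
  case: (boolP (i \in T0)) => iT /=.
    by rewrite big1 ?addr0 // => l _; rewrite wE iT.
  case E : (blk i) => [|b].
    by rewrite add0r big1 ?addr0 // => l _; rewrite wE iT E.
  have bn : (b < n)%N by apply: ltnW; rewrite -E blkn.
  rewrite add0r (bigD1 (Ordinal bn)) //= wE iT E eqxx /= big1 ?addr0 // ?add0r //.
  move=> l /eqP nl; rewrite wE iT E /=; case: eqP => // [[h]].
  by case: nl; apply: val_inj.
set P := \sum_(j < n) sym u (w j.+1).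
set Q := \sum_(j < n) sym (w 0%N) (w j.+1).
set RR := \sum_(i < n) \sum_(j < n) sym (2^-1 *: w i.+1) (w j.+1).
set H0 := outer z - outer x0.
have HE : outer xs - outer x0 = H0 + P + Q + RR.
  rewrite xsE outer_add /z sym_addl !sym_sumr -/z /R outer_sum -/RR -/P -/Q /H0.
  by rewrite addrAC [_ + (P + Q) - _]addrAC !addrA.
have uS : forall i, i \notin T0 -> u i 0 = 0 by move=> i /negbTE h; rewrite uE h.
have wS : forall j i, i \notin B j -> w j i 0 = 0.
  by move=> j i; rewrite inE => /negbTE h; rewrite wE h.
have whS : forall j i, i \notin B j -> (2^-1 *: w j) i 0 = 0.
  by move=> j i h; rewrite mxE wS ?mulr0.
have cTB : forall j, (#|T0 :|: B j| <= 2 * s)%N.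
  move=> j; apply: leq_trans (cardsU_le _ _) _.
  by rewrite mul2n -addnn; apply: leq_add; [exact: leq_trans T0k ks | exact: Bcard].
have cBB : forall i j, (#|B i :|: B j| <= 2 * s)%N.
  by move=> i j; apply: leq_trans (cardsU_le _ _) _; rewrite mul2n -addnn; apply: leq_add; apply: Bcard.
have inU1 : forall (A A' : {set 'I_n}) (x : 'cV[C]_n), (forall i, i \notin A -> x i 0 = 0) ->
    forall i, i \notin A :|: A' -> x i 0 = 0.
  by move=> A A' x h i; rewrite inE negb_or => /andP [h1 _]; apply: h.
have inU2 : forall (A A' : {set 'I_n}) (x : 'cV[C]_n), (forall i, i \notin A' -> x i 0 = 0) ->
    forall i, i \notin A :|: A' -> x i 0 = 0.
  by move=> A A' x h i; rewrite inE negb_or => /andP [_ h2]; apply: h.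
have Cc0' : 0 <= Cc by apply: ltW.
set Sv := \sum_(j < n) l2norm (w j.+1).
have Sv0 : 0 <= Sv by apply: sumr_ge0 => j _; apply: l2_ge0.
have l2h : forall j, l2norm (2^-1 *: w j) = 2^-1 * l2norm (w j).
  by move=> j; rewrite l2Z ger0_norm // invr_ge0 ler0n.
have MP : MM av P <= Cc * (2 * l2norm u * Sv).
  apply: le_trans (MM_sum _ _ _ _) _.
  rewrite /Sv mulr_sumr mulr_sumr; apply: ler_sum => j _.
  rewrite -mulrA; exact: (RIP_upper_sym rip (cTB j.+1) (inU1 _ _ _ uS) (inU2 _ _ _ (wS j.+1)) Cc0').
have MQ : MM av Q <= Cc * (2 * l2norm (w 0%N) * Sv).
  apply: le_trans (MM_sum _ _ _ _) _.
  rewrite /Sv mulr_sumr mulr_sumr; apply: ler_sum => j _.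
  rewrite -mulrA; exact: (RIP_upper_sym rip (cBB 0%N j.+1) (inU1 _ _ _ (wS 0%N)) (inU2 _ _ _ (wS j.+1)) Cc0').
have MR : MM av RR <= Cc * Sv ^+ 2.
  apply: le_trans (MM_sum _ _ _ _) _.
  rewrite /Sv expr2 -sum_prod mulr_sumr; apply: ler_sum => i _.
  apply: le_trans (MM_sum _ _ _ _) _.
  rewrite mulr_sumr; apply: ler_sum => j _.
  have := RIP_upper_sym rip (cBB i.+1 j.+1) (inU1 _ _ _ (whS i.+1)) (inU2 _ _ _ (wS j.+1)) Cc0'.
  by rewrite l2h -[2^-1 * _ * _]mulrA mulVKf ?pnatr_eq0.
have FP : frob P <= 2 * l2norm u * Sv.
  apply: le_trans (frob_sum _ _ _) _.
  rewrite /Sv mulr_sumr; apply: ler_sum => j _; rewrite -mulrA; exact: frob_sym.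
have FQ : frob Q <= 2 * l2norm (w 0%N) * Sv.
  apply: le_trans (frob_sum _ _ _) _.
  rewrite /Sv mulr_sumr; apply: ler_sum => j _; rewrite -mulrA; exact: frob_sym.
have FR : frob RR <= Sv ^+ 2.
  apply: le_trans (frob_sum _ _ _) _.
  rewrite /Sv expr2 -sum_prod; apply: ler_sum => i _.
  apply: le_trans (frob_sum _ _ _) _; apply: ler_sum => j _.
  by apply: le_trans (frob_sym _ _) _; rewrite l2h -[2^-1 * _ * _]mulrA mulVKf ?pnatr_eq0.
set Eb := 2 * l2norm u * Sv + 2 * l2norm (w 0%N) * Sv + Sv ^+ 2.
set f0 := frob H0.
have f00 : 0 <= f0 by apply: frob_ge0.
set MH := MM av (outer xs - outer x0).
have FH : frob (outer xs - outer x0) <= f0 + Eb.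
  rewrite HE /Eb !addrA; apply: le_trans (frobD _ _) _; apply: lerD => //.
  apply: le_trans (frobD _ _) _; apply: lerD => //.
  by apply: le_trans (frobD _ _) _; apply: lerD.
have MH0 : MM av H0 <= MH + Cc * Eb.
  have -> : H0 = (outer xs - outer x0) + - (P + Q + RR).
    have e : H0 + P + Q + RR = H0 + (P + Q + RR) by rewrite !addrA.
    by rewrite HE e addrK.
  apply: le_trans (MMD _ _ _) _; rewrite MMN; apply: lerD => //.
  rewrite /Eb !mulrDr; apply: le_trans (MMD _ _ _) _; apply: lerD => //.
  by apply: le_trans (MMD _ _ _) _; apply: lerD.
have zS : forall i, i \notin T0 :|: B 0%N -> z i 0 = 0.
  move=> i h; rewrite mxE (inU1 _ _ _ uS i h) (inU2 _ _ _ (wS 0%N) i h).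
  by rewrite addr0.
have low : c * f0 <= MM av H0 := (RIP_both_outer rip (cTB 0%N) zS (inU1 _ _ _ x0out)).1.
have key : Eb <= (4 / sqrtC a + a^-1) * f0.
  set nT := \sum_(i in T0) `|xs i 0|.
  set v1 := \sum_(i | i \notin T0) `|xs i 0|.
  set n0 := l1norm x0.
  have nT0 : 0 <= nT by apply: sumr_ge0.
  have v10 : 0 <= v1 by apply: sumr_ge0.
  have K1 : l1norm xs = nT + v1 by rewrite /l1norm (bigID (mem T0)).
  have K2 : n0 = \sum_(i in T0) `|x0 i 0|.
    rewrite /n0 /l1norm [X in X = _](bigID (mem T0)) /= [X in _ + X = _]big1 ?addr0 //.
    by move=> i iT; rewrite x0out // normr0.
  have K3 : v1 <= n0 - nT by rewrite lerBrDl -K1.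
  set t := fun j => \sum_(l in B j) `|xs l 0|.
  have K5 : \sum_(j < n) t j <= v1.
    rewrite /t /v1.
    under eq_bigr do rewrite big_mkcond.
    rewrite exchange_big /= [X in _ <= X]big_mkcond /=.
    apply: ler_sum => l _.
    case: (boolP (l \in T0)) => lT /=.
      by rewrite big1 // => j _; rewrite inE lT.
    rewrite (bigD1 (Ordinal (blkn l lT))) //= inE lT eqxx /= big1 ?addr0 //.
    move=> j /eqP nj; rewrite inE lT /=; case: eqP => // bj.
    by case: nj; apply: val_inj; rewrite /= bj.
  set ss := sqrtC (s%:R : C).
  have K6 : forall j, ss * l2norm (w j.+1) <= t j.
    move=> j.
    have tj0 : 0 <= t j by apply: sumr_ge0.
    have s0' : 0 < (s%:R : C) by rewrite ltr0n.
    have N0 : 0 <= \sum_(i in B j.+1) `|xs i 0| ^+ 2 by apply: sumr_ge0 => i _; apply: exprn_ge0.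
    rewrite /w l2_restrict /ss -sqrtCMn ?ler0n //.
    apply: sqrtC_le_l => //; first by rewrite mulr_ge0 ?ler0n.
    rewrite -(ler_pM2l s0').
    have e1 : s%:R * (s%:R * \sum_(i in B j.+1) `|xs i 0| ^+ 2) =
              \sum_(i in B j.+1) (s%:R * `|xs i 0|) ^+ 2.
      by rewrite mulrA -expr2 mulr_sumr; apply: eq_bigr => i _; rewrite exprMn.
    rewrite e1.
    apply: (@le_trans _ _ (\sum_(i in B j.+1) (t j) ^+ 2)).
      apply: ler_sum => i; rewrite inE => /andP [iT /eqP bi].
      apply: sqr_le; first by rewrite mulr_ge0 ?ler0n.
      exact: Bmono j i iT bi.
    rewrite sumr_const -[X in X <= _]mulr_natl; apply: ler_wpM2r; first exact: exprn_ge0.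
    rewrite ler_nat; exact: Bcard.
  have K7 : ss * Sv <= v1.
    rewrite /Sv mulr_sumr; apply: le_trans K5; apply: ler_sum => j _; exact: K6.
  have K8 : v1 ^+ 2 <= k%:R * f0.
    have zT : forall i, i \in T0 -> z i 0 = xs i 0.
      by move=> i iT; rewrite mxE uE wE iT /= addr0.
    apply: (@le_trans _ _ ((n0 - nT) * (n0 + nT))).
      rewrite expr2; apply: ler_pM => //; apply: le_trans K3 _.
      by rewrite lerD2l; apply: (le_trans (_ : - nT <= 0) nT0); rewrite oppr_le0.
    have -> : (n0 - nT) * (n0 + nT) =
      \sum_(i in T0) \sum_(j in T0) (`|x0 i 0| * `|x0 j 0| - `|xs i 0| * `|xs j 0|).
      have -> : (n0 - nT) * (n0 + nT) = n0 * n0 - nT * nT by ring.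
      rewrite K2 /nT !mulr_suml -sumrB; apply: eq_bigr => i _.
      by rewrite !mulr_sumr -sumrB.
    apply: (@le_trans _ _ (\sum_(i in T0) \sum_(j in T0) `|H0 i j|)).
      apply: ler_sum => i iT; apply: ler_sum => j jT.
      have e : H0 i j = xs i 0 * (xs j 0)^* - x0 i 0 * (x0 j 0)^*.
        by rewrite /H0 mxE [X in _ + X]mxE /outer !mulE !zT.
      have := lerB_dist (x0 i 0 * (x0 j 0)^*) (xs i 0 * (xs j 0)^*).
      by rewrite !normrM !norm_conjC e distrC.
    rewrite pair_big /=.
    rewrite (eq_bigl (fun p => p \in setX T0 T0)); last by move=> [p1 p2]; rewrite in_setX.
    apply: le_trans (CScard _ _) _.
    have -> : sqrtC (#|[pred p | p \in setX T0 T0]|%:R : C) = #|T0|%:R.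
      by rewrite cardsX natrM -expr2 sqrCK ?ler0n.
    apply: ler_pM; rewrite ?ler0n ?sqrtC_ge0 ?ler_nat //.
      by apply: sumr_ge0 => p _; apply: exprn_ge0.
    rewrite /f0 frob_pair; apply: sqrtC_le; first by apply: sumr_ge0 => p _; apply: exprn_ge0.
    apply: sum_subset_le; first by move=> p; apply: exprn_ge0.
    by [].
  have [g [g1 [PH1 PH2]]] := phase z x0.
  set D2 := \sum_i `|g * z i 0 - x0 i 0| ^+ 2.
  have D20 : 0 <= D2 by apply: sumr_ge0 => i _; apply: exprn_ge0.
  set sk := sqrtC (k%:R : C).
  have K10 : v1 <= sk * sqrtC D2.
    apply: le_trans K3 _.
    have -> : n0 - nT = \sum_(i in T0) (`|x0 i 0| - `|xs i 0|) by rewrite K2 sumrB.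
    apply: (@le_trans _ _ (\sum_(i in T0) `|g * z i 0 - x0 i 0|)).
      apply: ler_sum => i iT.
      have zi : z i 0 = xs i 0 by rewrite mxE uE wE iT /= addr0.
      have := lerB_normD (x0 i 0) (- (g * xs i 0)).
      by rewrite normrN normrM g1 mul1r zi distrC.
    apply: le_trans (CScard _ _) _.
    apply: ler_pM; rewrite ?sqrtC_ge0 ?ler0n //.
      by apply: sumr_ge0 => i _; apply: exprn_ge0.
      by apply: sqrtC_le; rewrite ?ler0n // ler_nat.
    apply: sqrtC_le; first by apply: sumr_ge0 => i _; apply: exprn_ge0.
    apply: sum_subset_le; first by move=> i; apply: exprn_ge0.
    by [].

  set X := l2norm u + l2norm (w 0%N).
  have X0 : 0 <= X by rewrite addr_ge0 ?l2_ge0.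
  have K12 : X * sqrtC D2 <= 2 * f0.
    have N2E : \sum_i `|z i 0| ^+ 2 = l2norm u ^+ 2 + l2norm (w 0%N) ^+ 2.
      rewrite /l2norm !sqrtCK -big_split /=; apply: eq_bigr => i _.
      rewrite mxE uE wE; case: (i \in T0) => /=;
        by rewrite !(addr0, add0r, normr0, expr0n).
    have X2 : X ^+ 2 <= 2 * \sum_i `|z i 0| ^+ 2.
      have := two_mul_le (nneg_real (l2_ge0 u)) (nneg_real (l2_ge0 (w 0%N))).
      rewrite -subr_ge0 => h; rewrite N2E /X -subr_ge0.
      set p := l2norm u; set q := l2norm (w 0%N).
      have -> : 2 * (p ^+ 2 + q ^+ 2) - (p + q) ^+ 2 = p ^+ 2 + q ^+ 2 - 2 * (p * q) by ring.
      exact: h.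
    apply: le_of_sqr; first by rewrite mulr_ge0 // sqrtC_ge0.
      by rewrite mulr_ge0 // ler0n.
    rewrite exprMn sqrtCK.
    apply: le_trans (ler_wpM2r D20 X2) _.
    have f2 : f0 ^+ 2 = \sum_i \sum_j `|H0 i j| ^+ 2 by rewrite /f0 /frob sqrtCK.
    rewrite exprMn f2.
    apply: (@le_trans _ _ (2 * (D2 * (\sum_i `|z i 0| ^+ 2 + \sum_i `|x0 i 0| ^+ 2)))).
      rewrite -mulrA ler_wpM2l // mulrC ler_wpM2l // lerDl.
      by apply: sumr_ge0 => i _; apply: exprn_ge0.
    by rewrite expr2 -mulrA ler_wpM2l.
  have sk0 : 0 < sk by rewrite sqrtC_gt0 ltr0n.
  have k0 : 0 < (k%:R : C) by rewrite ltr0n.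
  have ssE : ss = sqrtC a * sk by rewrite /ss /sk -aks sqrtCMn ?ltW ?ler0n.
  have EbE : Eb = 2 * (X * Sv) + Sv ^+ 2 by rewrite /Eb /X; ring.
  have A1 : sqrtC a * (X * Sv) <= 2 * f0.
    rewrite -(ler_pM2l sk0).
    have -> : sk * (sqrtC a * (X * Sv)) = X * (ss * Sv) by rewrite ssE; ring.
    apply: le_trans (ler_wpM2l X0 K7) _.
    apply: le_trans (ler_wpM2l X0 K10) _.
    rewrite mulrCA; apply: ler_wpM2l; [exact: ltW | exact: K12].
  have A2 : a * Sv ^+ 2 <= f0.
    rewrite -(ler_pM2l k0).
    have -> : k%:R * (a * Sv ^+ 2) = (ss * Sv) ^+ 2.
      by rewrite exprMn /ss sqrtCK -aks; ring.
    apply: le_trans K8; apply: sqr_le => //; apply: mulr_ge0 => //.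
    by rewrite sqrtC_ge0 ler0n.
  rewrite EbE [X in _ <= X]mulrDl; apply: lerD.
    rewrite -(ler_pM2l sa0).
    have -> : sqrtC a * (4 / sqrtC a * f0) = 2 * (2 * f0).
      by field; rewrite gt_eqF.
    rewrite mulrCA; apply: ler_wpM2l => //.
  by rewrite -(ler_pM2l a0) mulVKf ?gt_eqF.
set beta := 4 / sqrtC a + a^-1.
have denE : c - 4 * Cc / sqrtC a - Cc / a = c - Cc * beta.
  by rewrite /beta; ring.
rewrite denE in den0 *.
have h1 : (c - Cc * beta) * f0 <= MH.
  rewrite mulrBl lerBlDr; apply: le_trans low _; apply: le_trans MH0 _.
  by rewrite lerD2l -mulrA ler_wpM2l.
apply: le_trans FH _.
have -> : (a^-1 + 4 / sqrtC a + 1) = 1 + beta by rewrite /beta; ring.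
have beta0 : 0 <= beta.
  apply: addr_ge0; last by rewrite invr_ge0 ltW.
  by apply: mulr_ge0 => //; rewrite invr_ge0 ltW.
apply: (@le_trans _ _ ((1 + beta) * f0)); first by rewrite mulrDl mul1r lerD2l.
rewrite -mulrA; apply: ler_wpM2l; first exact: addr_ge0 ler01 beta0.
by rewrite -(ler_pM2l den0) mulrA mulfV ?mul1r // gt_eqF.
Qed.

End Core2.
Unset Implicit Arguments.
Lemma inv_sqr_mul (C : numClosedFieldType) (x : C) : (x ^+ 2)^-1 * x = x^-1.
Proof.
have [->|x0] := eqVneq x 0; first by rewrite expr0n /= invr0 mul0r.
by rewrite expr2 invfM -mulrA mulVf // mulr1.
Qed.

Theorem theorem2 (C : numClosedFieldType) (n m : nat) (av : 'I_m -> 'cV[C]_n)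
  (k s : nat) (a c Cc : C) :
  (1 <= k)%N -> a \is Num.real -> 0 < a -> a * k%:R = s%:R ->
  c \is Num.real -> Cc \is Num.real -> 0 < c -> 0 < Cc ->
  RIP av 2 (2 * s) c Cc ->
  0 < c - 4 * Cc / sqrtC a - Cc / a ->
  forall (x0 : 'cV[C]_n), x0 != 0 -> (l0norm x0 <= k)%N ->
  forall (eps : C), eps \is Num.real -> 0 <= eps ->
  forall (w y : 'cV[C]_m), (forall j, w j 0 \is Num.real) -> l2norm w <= eps ->
  y = measure av (outer x0) + w ->
  forall (xs : 'cV[C]_n), feasible av y eps xs ->
  (forall x : 'cV[C]_n, feasible av y eps x -> l1norm xs <= l1norm x) ->
  let C1 := (a^-1 + 4 / sqrtC a + 1) / (c - 4 * Cc / sqrtC a - Cc / a) in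
  frob (outer xs - outer x0) <= C1 * (2 * eps / sqrtC m%:R) /\
  exists gamma : C, `|gamma| = 1 /\
    l2norm (gamma *: xs - x0) <=
      Num.min (2 * sqrtC 2 * C1 * eps / (sqrtC m%:R * l2norm x0))
              (2 * sqrtC (2 * sqrtC 2 * C1) * sqrtC eps *
                 sqrtC (sqrtC (n%:R / m%:R))).
Proof.
move=> k1 ar a0 aks cr Ccr c0 Cc0 rip den0 x0 x0nz l0 eps epsr eps0 w y wr lw yE
  xs fs opt C1.
have x0f : feasible av y eps x0.
  by rewrite /feasible yE opprD addrA subrr add0r l2N.
have l1le := opt x0 x0f.
have cH := core k1 ar a0 aks cr Ccr c0 Cc0 rip den0 x0nz l0 l1le.
rewrite -/C1 in cH.
have sa0 : 0 < sqrtC a by rewrite sqrtC_gt0.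
have C10 : 0 <= C1.
  apply: divr_ge0; last exact: ltW.
  apply: addr_ge0; last by [].
  apply: addr_ge0; first by rewrite invr_ge0 ltW.
  by apply: mulr_ge0 => //; rewrite invr_ge0 ltW.
set H := outer xs - outer x0.
have MHb : MM av H <= 2 * eps / sqrtC m%:R.
  rewrite /MM.
  have dE : measure av H = (measure av (outer xs) - y) + w.
    by rewrite /H measureB yE opprD addrA addrNK.
  rewrite dE.
  have l1b : l1norm (measure av (outer xs) - y + w) <=
             sqrtC m%:R * l2norm (measure av (outer xs) - y + w).
    by apply: le_trans (CScard _ _) _; rewrite cardT size_enum_ord.
  have l2b : l2norm (measure av (outer xs) - y + w) <= 2 * eps.
    by apply: le_trans (l2D _ _) _; rewrite mulr2n mulrDl mul1r lerD.
  apply: (@le_trans _ _ (m%:R^-1 * (sqrtC m%:R * (2 * eps)))).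
    apply: ler_wpM2l; first by rewrite invr_ge0 ler0n.
    apply: le_trans l1b _; apply: ler_wpM2l => //; by rewrite sqrtC_ge0 ler0n.
  by rewrite [X in X <= _]mulrA -[X in X^-1 * _ * _](sqrtCK m%:R) inv_sqr_mul mulrC.
have Fb : frob H <= C1 * (2 * eps / sqrtC m%:R).
  by apply: le_trans cH _; apply: ler_wpM2l.
split => //.
have [g [g1 [PH1 PH2]]] := phase xs x0.
exists g; split => //.
set D2 := \sum_i `|g * xs i 0 - x0 i 0| ^+ 2.
set p := \sum_i `|xs i 0| ^+ 2.
set q := \sum_i `|x0 i 0| ^+ 2.
set F2 := \sum_i \sum_j `|(outer xs - outer x0) i j| ^+ 2.
have l2E : l2norm (g *: xs - x0) = sqrtC D2.
  by rewrite /l2norm; under eq_bigr do rewrite !mxE.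
rewrite l2E.
have [i0 xi0] : exists i0, x0 i0 0 != 0.
  apply/existsP; apply: contraR x0nz; rewrite negb_exists => /forallP h.
  by apply/eqP/matrixP => i j; rewrite (ord1 j) mxE; move/negPn/eqP: (h i).
have p0 : 0 <= p by apply: sumr_ge0 => i _; apply: exprn_ge0.
have D20 : 0 <= D2 by apply: sumr_ge0 => i _; apply: exprn_ge0.
have F20 : 0 <= F2 by apply: sumr_ge0 => i _; apply: sumr_ge0 => j _; apply: exprn_ge0.
have q0 : 0 < q.
  apply: (@lt_le_trans _ _ (`|x0 i0 0| ^+ 2)); first by rewrite exprn_gt0 // normr_gt0.
  by rewrite /q (bigD1 i0) //= lerDl; apply: sumr_ge0 => i _; rewrite exprn_ge0.
have pq0 : 0 < p + q by apply: ltr_wpDl.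
set K := C1 * (2 * eps / sqrtC m%:R).
have K0 : 0 <= K.
  rewrite /K mulr_ge0 // mulr_ge0 ?invr_ge0 ?sqrtC_ge0 ?ler0n //.
  by apply: mulr_ge0.
have FF : frob H = sqrtC F2 by [].
have F2K : F2 <= K ^+ 2.
  rewrite -(sqrtCK F2); apply: sqr_le; first by rewrite sqrtC_ge0.
  by rewrite -FF.
have sq0 : 0 < sqrtC q by rewrite sqrtC_gt0.
have s20 : 0 <= sqrtC (2 : C) by rewrite sqrtC_ge0 ler0n.
have B1 : sqrtC D2 <= 2 * sqrtC 2 * C1 * eps / (sqrtC m%:R * l2norm x0).
  have -> : 2 * sqrtC 2 * C1 * eps / (sqrtC m%:R * l2norm x0) = sqrtC 2 * K / sqrtC q.
    by rewrite /K /l2norm -/q invfM; ring.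
  rewrite -(ler_pM2r sq0) mulfVK ?gt_eqF //.
  apply: le_of_sqr.
  - by apply: mulr_ge0; rewrite sqrtC_ge0 // ltW.
  - by apply: mulr_ge0.
  rewrite exprMn !sqrtCK exprMn sqrtCK.
  apply: (@le_trans _ _ (D2 * (p + q))).
    by apply: ler_wpM2l => //; rewrite lerDr.
  by apply: le_trans PH1 _; rewrite -/F2; apply: ler_wpM2l.
have sF : sqrtC F2 <= p + q.
  by apply: sqrtC_le_l => //; apply: ltW.
have D2K : D2 <= 2 * K.
  have h : D2 <= 2 * sqrtC F2.
    rewrite -(ler_pM2r pq0).
    apply: le_trans PH1 _; rewrite -/F2 -mulrA; apply: ler_wpM2l => //.
    rewrite -{1}(sqrtCK F2) expr2; apply: ler_wpM2l => //; by rewrite sqrtC_ge0.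
  by apply: le_trans h _; apply: ler_wpM2l => //; rewrite -FF.
have sqV : forall x : C, 0 <= x -> sqrtC (x^-1) = (sqrtC x)^-1.
  move=> x x0'; rewrite -{1}(sqrtCK x) -exprVn sqrCK //.
  by rewrite invr_ge0 sqrtC_ge0.
have n1 : (1 <= n)%N by apply: leq_ltn_trans (leq0n i0) (ltn_ord i0).
have sn1 : 1 <= sqrtC (n%:R : C).
  by rewrite -{1}sqrtC1; apply: sqrtC_le; [exact: ler01 | by rewrite ler1n].
have s21 : 1 <= 2 * sqrtC (2 : C).
  have h : 1 <= sqrtC (2 : C) by rewrite -{1}sqrtC1; apply: sqrtC_le; [exact: ler01 | by rewrite ler1n].
  by rewrite mulr2n mulrDl mul1r; apply: le_trans h _; rewrite lerDl.
set R2 := 2 * sqrtC (2 * sqrtC 2 * C1) * sqrtC eps * sqrtC (sqrtC (n%:R / m%:R)).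
have sm0 : 0 <= (sqrtC (m%:R : C))^-1 by rewrite invr_ge0 sqrtC_ge0 ler0n.
have R20 : 0 <= R2.
  have h2 : 0 <= 2 * sqrtC 2 * C1 by apply: mulr_ge0 => //; apply: mulr_ge0.
  rewrite /R2; apply: mulr_ge0; last by rewrite !sqrtC_ge0 divr_ge0 ?ler0n.
  apply: mulr_ge0; last by rewrite sqrtC_ge0.
  by apply: mulr_ge0 => //; rewrite sqrtC_ge0.
have B2 : sqrtC D2 <= R2.
  apply: sqrtC_le_l; [exact: D20 | exact: R20 |].
  apply: le_trans D2K _.
  have -> : R2 ^+ 2 = 4 * (2 * sqrtC 2 * C1) * eps * sqrtC (n%:R / m%:R).
    rewrite /R2 !exprMn !sqrtCK; ring.
  have -> : sqrtC (n%:R / m%:R) = sqrtC (n%:R : C) * (sqrtC (m%:R : C))^-1.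
    by rewrite sqrtCMn ?invr_ge0 ?ler0n // sqV ?ler0n.
  have -> : 2 * K = (4 * C1 * eps * (sqrtC (m%:R : C))^-1) * 1 by rewrite /K; ring.
  have -> : 4 * (2 * sqrtC 2 * C1) * eps * (sqrtC n%:R * (sqrtC m%:R)^-1) =
     (4 * C1 * eps * (sqrtC (m%:R : C))^-1) * ((2 * sqrtC 2) * sqrtC n%:R) by ring.
  apply: ler_wpM2l.
    by apply: mulr_ge0 => //; apply: mulr_ge0 => //; apply: mulr_ge0.
  apply: (@le_trans _ _ (1 * 1)); first by rewrite mul1r.
  by apply: ler_pM; [exact: ler01 | exact: ler01 | exact: s21 | exact: sn1].
have B10 : 0 <= 2 * sqrtC 2 * C1 * eps / (sqrtC m%:R * l2norm x0).
  apply: divr_ge0; last by apply: mulr_ge0; [rewrite sqrtC_ge0 ler0n | exact: l2_ge0].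
  by apply: mulr_ge0 => //; apply: mulr_ge0 => //; apply: mulr_ge0.
by case: (real_leP (nneg_real B10) (nneg_real R20)) => _.
Qed.
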